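(* In the setting of the periodic log-normal approximation (below), with $\boldsymbol\Phi_{D^\star}(\theta)\in\overline{\mathbf{CM}}(n)$, suppose at least one of the following holds: (1) $\omega=n$; (2) $\delta_{k_3}=n$ for some $k_3\in\{1,\dots,\omega\}$; (3) $\overline\omega=n$; (4) $\overline\delta_{k_4}=n$ for some $k_4\in\{1,\dots,\overline\omega\}$. Then $\Sigma^d_\epsilon(t)$ is positive definite for every $t\ge0$.
   Context: Setting: $D^\star:[0,\infty)\to\mathbb{R}^{n\times n}$, $\Lambda^\star:[0,\infty)\to\mathbb{R}^{n\times N}$ continuous and $\theta$-periodic (in the paper, $D^\star(t)$ is the Jacobian with respect to $\ln\mathbf{x}$ of $F_i(t,\mathbf{x})=f_i(t,\mathbf{x})/x_i-\frac\epsilon2\sum_jg_{ij}^2(t,\mathbf{x})$ at $e^{\boldsymbol\Psi^\star_\epsilon(t)}$ and $\Lambda^\star(t)=(g_{ij}(t,e^{\boldsymbol\Psi^\star_\epsilon(t)}))$). $\boldsymbol\Phi_{D^\star}$ is the fundamental matrix with $\boldsymbol\Phi_{D^\star}(0)=\mathbf{I}_n$; $\overline{\mathbf{CM}}(n)$ is the set of real $n\times n$ matrices with all eigenvalues of modulus in $(0,1)$. $\Upsilon(t)=\int_0^t(\boldsymbol\Phi_{D^\star}(t)\boldsymbol\Phi_{D^\star}^{-1}(s)\Lambda^\star(s))(\cdots)^{\top}ds$; $\Sigma^d_\epsilon(0)$ is the unique symmetric solution of $\boldsymbol\Phi_{D^\star}(\theta)\Sigma\boldsymbol\Phi_{D^\star}(\theta)^\top-\Sigma+\epsilon\Upsilon(\theta)=\mathbb{O}$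 and $\Sigma^d_\epsilon(t)=\boldsymbol\Phi_{D^\star}(t)\Sigma^d_\epsilon(0)\boldsymbol\Phi_{D^\star}^\top(t)+\epsilon\Upsilon(t)$, $\epsilon>0$. $E_{n,j}$ is the diagonal matrix with a single $1$ at $(j,j)$; $\mathbf{u}_j$ the $j$-th standard basis vector. $\omega=\operatorname{rank}\Upsilon(\theta)$; $\mathcal{H}_\epsilon$ orthogonal with $\mathcal{H}_\epsilon\Upsilon(\theta)\mathcal{H}_\epsilon^\top=\sum_{k=1}^\omega\lambda_k^\oplus E_{n,\mu_k}$, $\lambda_k^\oplus>0$, $\mu_1<\dots<\mu_\omega$; $A_{[3]}=\mathcal{H}_\epsilon\boldsymbol\Phi_{D^\star}(\theta)\mathcal{H}_\epsilon^{-1}$ and $\delta_k:=\dim\operatorname{span}\{A_{[3]}^j\mathbf{u}_{\mu_k}:j\ge0\}$. Further $\lambda^\oplus_\vartriangle>0$, $\overline\omega\in\{0,\dots,\omega\}$ and indices $\overline\mu_1<\dots<\overline\mu_{\overline\omega}$ are such that $\Upsilon(\theta)\succeq\lambda^\oplus_\vartriangle\sum_{k=1}^{\overline\omega}E_{n,\overline\mu_k}$, and $\overline\delta_k:=\dim\operatorname{span}\{\boldsymbol\Phi_{D^\star}(\theta)^j\mathbf{u}_{\overline\mu_k}:j\ge0\}$. *)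

(* Defs.v *)
From HB Require Import structures.
From mathcomp Require Import all_boot all_order all_algebra.
From mathcomp Require Import all_classical all_reals all_analysis.
From mathcomp Require Import complex.
Set Implicit Arguments. Unset Strict Implicit. Unset Printing Implicit Defensive.
Import Order.TTheory GRing.Theory Num.Theory.
Import numFieldNormedType.Exports.
Local Open Scope classical_set_scope.
Local Open Scope ring_scope.

Definition Emat (R : pzRingType) (n : nat) (j : 'I_n) : 'M[R]_n := delta_mx j j.

Definition ubasis (R : pzRingType) (n : nat) (j : 'I_n) : 'cV[R]_n := delta_mx j 0.

Definition posdef (R : realType) (n : nat) (M : 'M[R]_n) : Prop :=
  M^T = M /\ forall x : 'cV[R]_n, x != 0 -> 0 < (x^T *m M *m x) 0 0.
Definition psd (R : realType) (n : nat) (M : 'M[R]_n) : Prop :=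
  M^T = M /\ forall x : 'cV[R]_n, 0 <= (x^T *m M *m x) 0 0.

Definition CMbar (R : realType) (n : nat) (A : 'M[R]_n) : Prop :=
  forall z : R[i], root (char_poly (map_mx (fun x : R => (x%:C)%C) A)) z ->
    (0 < `|z| < 1).

Definition krylov (R : pzRingType) (n N : nat) (A : 'M[R]_n) (u : 'cV[R]_n)
  : 'M[R]_(N, n) := \matrix_(j < N, k < n) ((A ^+ j) *m u) k 0.

(* dim span{ A^j u : j >= 0 } = d : the span of the whole (infinite) family
   is the increasing union of the spans of its first N members, so its
   dimension is the maximum over all N of the rank of the Krylov matrix. *)
Definition krylov_dim_eq (R : fieldType) (n : nat) (A : 'M[R]_n)
  (u : 'cV[R]_n) (d : nat) : Prop :=
  (exists N, \rank (krylov N A u) = d) /\ (forall N, \rank (krylov N A u) <= d)%N.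

Definition fundamental (R : realType) (n : nat) (D : R -> 'M[R]_n)
  (Phi : R -> 'M[R]_n) : Prop :=
  Phi 0 = 1%:M /\
  forall (t : R) (i j : 'I_n),
    is_derive t (1 : R) (fun s : R => Phi s i j) ((D t *m Phi t) i j).

Definition Upsilon (R : realType) (n N : nat) (Phi : R -> 'M[R]_n)
  (Lam : R -> 'M[R]_(n, N)) (t : R) : 'M[R]_n :=
  \matrix_(i, j)
    (\int[lebesgue_measure]_(s in `[0, t])
        (let G := Phi t *m invmx (Phi s) *m Lam s in (G *m G^T) i j)).

Definition Sigma_d (R : realType) (n N : nat) (Phi : R -> 'M[R]_n)
  (Lam : R -> 'M[R]_(n, N)) (eps : R) (S0 : 'M[R]_n) (t : R) : 'M[R]_n :=
  Phi t *m S0 *m (Phi t)^T + eps *: Upsilon Phi Lam t.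

Arguments Emat {R n} j.
Arguments ubasis {R n} j.

(* Main.v *)
Require Import Defs.
From HB Require Import structures.
From mathcomp Require Import all_boot all_order all_algebra.
From mathcomp Require Import all_classical all_reals all_analysis.
From mathcomp Require Import complex.
From mathcomp Require Import ring lra.
From mathcomp Require Import perm.
Set Implicit Arguments. Unset Strict Implicit. Unset Printing Implicit Defensive.
Import Order.TTheory GRing.Theory Num.Theory.
Import numFieldNormedType.Exports.
Local Open Scope classical_set_scope.
Local Open Scope ring_scope.
Section P1.
Variable R : realType.

Definition to0 (u : nat -> R) := forall e : R, 0 < e -> exists M, forall m, (M <= m)%N -> `|u m| < e.

Lemma geo_small (r c e : R) : 0 <= r < 1 -> 0 < e -> exists K, forall k, (K <= k)%N -> r ^+ k * c < e.
Proof.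
move=> /andP[r0 r1] e0.
have c1 : 0 < `|c| + 1 by rewrite ltr_pwDr // normr_ge0.
have : (GRing.exp r : R ^nat) x @[x --> \oo] --> 0 by apply: cvg_expr; rewrite ger0_norm.
move/cvgr0Pnorm_lt => /(_ (e / (`|c| + 1))).
rewrite divr_gt0 // => /(_ isT) [K _ HK]; exists K => k Kk.
have := HK k Kk; rewrite /= ger0_norm ?exprn_ge0 // => hk.
rewrite (le_lt_trans (ler_norm _)) // normrM ger0_norm ?exprn_ge0 //.
have : r ^+ k * `|c| <= r ^+ k * (`|c| + 1) by rewrite ler_wpM2l ?exprn_ge0 // lerDl.
move/le_lt_trans; apply; by rewrite -ltr_pdivlMr.
Qed.

Lemma rec_to0 (b g : nat -> R) (r : R) : 0 <= r < 1 -> (forall m, 0 <= b m) ->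
  (forall m, b m.+1 <= r * b m + g m) -> to0 g -> to0 b.
Proof.
move=> /andP[r0 r1] b0 brec hg e e0.
have d0 : 0 < e * (1 - r) / 2 by rewrite divr_gt0 // mulr_gt0 // subr_gt0.
have [M HM] := hg _ d0.
have key : forall k, b (M + k)%N <= r ^+ k * b M + e / 2.
  elim=> [|k IH]; first by rewrite addn0 expr0 mul1r lerDl divr_ge0 // ltW.
  rewrite addnS (le_trans (brec _)) //.
  have gk : g (M + k)%N <= e * (1 - r) / 2.
    by rewrite (le_trans (ler_norm _)) // ltW // HM // leq_addr.
  have := ler_wpM2l r0 IH => h1.
  have := lerD h1 gk => h2; apply: (le_trans h2).
  by rewrite exprS le_eqVlt; apply/orP; left; apply/eqP; field.
have [K HK] := geo_small (b M) (r:=r) (e:=e/2) (ltac:(by rewrite r0 r1)) ltac:(by rewrite divr_gt0).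
exists (M + K)%N => m hm.
have -> : m = (M + (m - M))%N by rewrite subnKC // (leq_trans (leq_addr K M)).
rewrite ger0_norm // (le_lt_trans (key _)) //.
have : r ^+ (m - M) * b M < e / 2 by apply: HK; rewrite leq_subRL ?(leq_trans (leq_addr K M)).
move=> h; lra.
Qed.

Lemma to0D (u v : nat -> R) : to0 u -> to0 v -> to0 (fun m => u m + v m).
Proof.
move=> hu hv e e0; have e2 : 0 < e / 2 by rewrite divr_gt0.
have [M1 H1] := hu _ e2; have [M2 H2] := hv _ e2.
exists (maxn M1 M2) => m hm; rewrite (le_lt_trans (ler_normD _ _)) //.
have a := H1 m (leq_trans (leq_maxl _ _) hm); have b := H2 m (leq_trans (leq_maxr _ _) hm).
lra.
Qed.

Lemma to0_le (u v : nat -> R) : to0 v -> (forall m, `|u m| <= v m) -> to0 u.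
Proof.
move=> hv huv e e0; have [M HM] := hv _ e0; exists M => m hm.
by rewrite (le_lt_trans (huv m)) // (le_lt_trans (ler_norm _)) // HM.
Qed.

Lemma to0Z (c : R) (u : nat -> R) : to0 u -> to0 (fun m => c * u m).
Proof.
move=> hu e e0; have c1 : 0 < `|c| + 1 by rewrite ltr_pwDr // normr_ge0.
have [M HM] := hu (e / (`|c| + 1)) (divr_gt0 e0 c1); exists M => m hm.
rewrite normrM; have := HM m hm; rewrite ltr_pdivlMr // => h.
apply: le_lt_trans h; rewrite mulrC; apply: ler_wpM2l; rewrite ?normr_ge0 // lerDl //.
Qed.

Lemma to0M (u v : nat -> R) : to0 u -> to0 v -> to0 (fun m => u m * v m).
Proof.
move=> hu hv e e0.
have [M1 H1] := hu _ e0; have [M2 H2] := hv _ ltr01.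
exists (maxn M1 M2) => m hm; rewrite normrM.
have a := H1 m (leq_trans (leq_maxl _ _) hm); have b := H2 m (leq_trans (leq_maxr _ _) hm).
by rewrite -[e]mulr1 ltr_pM // normr_ge0.
Qed.

Lemma to0_sum (I : eqType) (s : seq I) (P : pred I) (F : I -> nat -> R) :
  (forall i, to0 (F i)) -> to0 (fun m => \sum_(i <- s | P i) F i m).
Proof.
move=> hF; elim: s => [|i s IH].
  by move=> e e0; exists 0%N => m _; rewrite big_nil normr0.
case: (boolP (P i)) => Pi.
  have h := to0D (hF i) IH.
  by move=> e e0; have [M HM] := h e e0; exists M => m hm; rewrite big_cons Pi HM.
by move=> e e0; have [M HM] := IH e e0; exists M => m hm; rewrite big_cons (negbTE Pi) HM.
Qed.

Lemma ge_of_eps (a b : R) : (forall e, 0 < e -> b - e <= a) -> b <= a.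
Proof.
move=> h; rewrite leNgt; apply/negP => ab.
have e0 : 0 < (b - a) / 2 by rewrite divr_gt0 // subr_gt0.
have := h _ e0; lra.
Qed.

End P1.
Section P2.
Variable R : realType.
Local Notation normc := (@Normc.normc R).

Lemma normc_ge0 (x : R[i]) : 0 <= normc x.
Proof. by case: x => a b; rewrite /Normc.normc sqrtr_ge0. Qed.

Lemma normc_real (x : R) : normc (x%:C)%C = `|x|.
Proof. by rewrite /Normc.normc /= expr0n /= addr0 sqrtr_sqr. Qed.

Definition to0c (u : nat -> R[i]) := to0 (fun m => normc (u m)).

Lemma rec_to0c (b c : nat -> R[i]) (z : R[i]) : normc z < 1 ->
  (forall m, b m.+1 = z * b m + c m) -> to0c c -> to0c b.
Proof.
move=> z1 hb hc; apply: (@rec_to0 _ _ _ (normc z)) hc.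
- by rewrite normc_ge0 z1.
- by move=> m; exact: normc_ge0.
- by move=> m; rewrite hb (le_trans (le_normcD _ _)) // Normc.normcM.
Qed.

Variable n' : nat.
Variable Ac : 'M[R[i]]_n'.+1.
Variables (i j : 'I_n'.+1).

Definition sq (q : {poly R[i]}) (m : nat) := (Ac ^+ m * horner_mx Ac q) i j.

Lemma sq_step (z : R[i]) r m : sq r m.+1 = z * sq r m + sq (('X - z%:P) * r) m.
Proof.
rewrite /sq rmorphM rmorphB /= horner_mx_X horner_mx_C.
rewrite mulrA mulrBr exprSr mulrBl.
have -> : Ac ^+ m * z%:M * horner_mx Ac r = z *: (Ac ^+ m * horner_mx Ac r).
  by rewrite -!mulmxE mul_mx_scalar scalemxAl.
rewrite !mxE; ring.
Qed.

Lemma sq_ind (s : seq R[i]) : all (fun z => normc z < 1) s ->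
  forall r, to0c (sq (\prod_(z <- s) ('X - z%:P) * r)) -> to0c (sq r).
Proof.
elim: s => [|z s IH] /=; first by move=> _ r; rewrite big_nil mul1r.
move=> /andP[z1 hs] r h.
have h2 : to0c (sq (('X - z%:P) * r)).
  by apply: IH => //; move: h; rewrite big_cons -mulrA mulrCA.
by apply: (rec_to0c z1 (sq_step z r)).
Qed.

End P2.

Section P3.
Variable R : realType.
Local Notation normc := (@Normc.normc R).

Lemma pow_to0 (n' : nat) (A : 'M[R]_n'.+1) :
  (forall z : R[i], root (char_poly (map_mx (fun x : R => (x%:C)%C) A)) z -> (0 < `|z| < 1)) ->
  forall i j, to0 (fun m => (A ^+ m) i j).
Proof.
move=> hA i j.
set Ac := map_mx (fun x : R => (x%:C)%C) A.
have [s hs] := closed_field_poly_normal (char_poly Ac).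
have monic := char_poly_monic Ac.
rewrite (monicP monic) scale1r in hs.
have hall : all (fun z => normc z < 1) s.
  apply/allP => z zs; have : root (char_poly Ac) z.
    by rewrite hs root_prod_XsubC.
  by move/hA => /andP[_]; rewrite -[1]/((1%:C)%C) ltcR.
have h0 : to0c (sq Ac i j (\prod_(z <- s) ('X - z%:P) * 1)).
  rewrite mulr1 -hs /sq.
  have z0 : forall m, (Ac ^+ m * horner_mx Ac (char_poly Ac)) i j = 0.
    by move=> m; rewrite (Cayley_Hamilton Ac) -mulmxE mulmx0 mxE.
  by move=> e e0; exists 0%N => m _; rewrite z0 Normc.normc0 normr0.
have := sq_ind hall h0.
have eqm : forall m, (Ac ^+ m) = map_mx (fun x : R => (x%:C)%C) (A ^+ m).
  elim=> [|m IH]; first by rewrite !expr0 map_mx1.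
  by rewrite !exprS IH -!mulmxE map_mxM.
move=> h e e0; have [M HM] := h e e0; exists M => m hm.
have := HM m hm; rewrite /sq rmorph1 mulr1 eqm mxE normc_real.
by rewrite ger0_norm // normr_ge0.
Qed.

End P3.
Section P4.
Variable R : realType.

Definition qf n (M : 'M[R]_n) (x : 'cV[R]_n) := (x^T *m M *m x) 0 0.
Definition mnorm p q (M : 'M[R]_(p, q)) := \sum_i \sum_j `|M i j|.

Lemma qf_expand n (x y : 'cV[R]_n) (M : 'M[R]_n) :
  (x^T *m M *m y) 0 0 = \sum_i \sum_j x i 0 * M i j * y j 0.
Proof.
rewrite mxE (eq_bigr (fun j => \sum_i x i 0 * M i j * y j 0)).
  by rewrite exchange_big.
by move=> j _; rewrite mxE big_distrl /=; apply: eq_bigr => i _; rewrite !mxE.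
Qed.

Lemma mnorm_ge0 p q (M : 'M[R]_(p, q)) : 0 <= mnorm M.
Proof. by apply: sumr_ge0 => i _; apply: sumr_ge0 => j _; exact: normr_ge0. Qed.

Lemma row_le_mnorm p q (M : 'M[R]_(p, q)) k : \sum_j `|M k j| <= mnorm M.
Proof.
rewrite /mnorm (bigD1 k) //= lerDl; apply: sumr_ge0 => i _.
by apply: sumr_ge0 => j _; exact: normr_ge0.
Qed.

Lemma mnorm_mul a b c (P : 'M[R]_(a, b)) (Q : 'M[R]_(b, c)) :
  mnorm (P *m Q) <= mnorm P * mnorm Q.
Proof.
apply: (@le_trans _ _ (\sum_i \sum_k `|P i k| * \sum_j `|Q k j|)).
  apply: ler_sum => i _.
  apply: (@le_trans _ _ (\sum_j \sum_k `|P i k| * `|Q k j|)).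
    apply: ler_sum => j _; rewrite mxE (le_trans (ler_norm_sum _ _ _)) //.
    by apply: ler_sum => k _; rewrite normrM.
  rewrite exchange_big /=; apply: ler_sum => k _; rewrite mulr_sumr.
  by apply: ler_sum.
rewrite /mnorm mulr_suml; apply: ler_sum => i _; rewrite mulr_suml.
apply: ler_sum => k _; apply: ler_wpM2l; first exact: normr_ge0.
exact: (row_le_mnorm Q k).
Qed.

Lemma mnorm_tr p q (M : 'M[R]_(p, q)) : mnorm M^T = mnorm M.
Proof. by rewrite /mnorm exchange_big; apply: eq_bigr => i _; apply: eq_bigr => j _; rewrite mxE. Qed.

Lemma entry_le_mnorm (M : 'M[R]_1) : `|M 0 0| <= mnorm M.
Proof. by rewrite /mnorm !big_ord1. Qed.

Lemma sum_ge_term (f : nat -> R) k m : (forall j, 0 <= f j) -> (k < m)%N ->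
  f k <= \sum_(j < m) f j.
Proof.
move=> f0 km; rewrite (bigD1 (Ordinal km)) //= lerDl.
by apply: sumr_ge0 => j _.
Qed.

Lemma lyap_expand n (A S0 U : 'M[R]_n) (eps : R) :
  A *m S0 *m A^T - S0 + eps *: U = 0 -> forall m,
  S0 = \sum_(k < m) (A ^+ k *m (eps *: U) *m (A ^+ k)^T) + A ^+ m *m S0 *m (A ^+ m)^T.
Proof.
move=> hL; have hS : S0 = A *m S0 *m A^T + eps *: U.
  by apply/eqP; rewrite eq_sym -subr_eq0 -hL addrAC.
elim=> [|m IH]; first by rewrite big_ord0 add0r expr0 mul1mx trmx1 mulmx1.
rewrite big_ord_recr /= -addrA {1}IH; congr (_ + _).
rewrite {1}hS mulmxDr mulmxDl addrC; congr (_ + _).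
by rewrite exprSr -!mulmxE trmx_mul !mulmxA.
Qed.

Lemma qf_add n (M1 M2 : 'M[R]_n) x : qf (M1 + M2) x = qf M1 x + qf M2 x.
Proof. by rewrite /qf mulmxDr mulmxDl mxE. Qed.

Lemma qf_sum n m (F : 'I_m -> 'M[R]_n) x : qf (\sum_k F k) x = \sum_k qf (F k) x.
Proof.
elim: m F => [|m IH] F; first by rewrite !big_ord0 /qf mulmx0 mul0mx mxE.
by rewrite !big_ord_recr /= qf_add IH.
Qed.

Lemma qf_conj n (B M : 'M[R]_n) x : qf (B *m M *m B^T) x = qf M (B^T *m x).
Proof. by rewrite /qf trmx_mul trmxK !mulmxA. Qed.

Lemma qfZ n (M : 'M[R]_n) c x : qf (c *: M) x = c * qf M x.
Proof. by rewrite /qf -scalemxAr -scalemxAl mxE. Qed.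

Lemma S0_posdef n (A S0 U : 'M[R]_n) (eps : R) :
  0 < eps -> (forall i j, to0 (fun m => (A ^+ m) i j)) ->
  A *m S0 *m A^T - S0 + eps *: U = 0 ->
  (forall y, 0 <= qf U y) ->
  (forall x, x != 0 -> exists k, 0 < qf U ((A ^+ k)^T *m x)) ->
  forall x, x != 0 -> 0 < qf S0 x.
Proof.
move=> e0 hA hL hU hx x x0.
have [k hk] := hx x x0.
have hrest : to0 (fun m => qf S0 ((A ^+ m)^T *m x)).
  have hmn : to0 (fun m => mnorm (A ^+ m)).
    rewrite /mnorm; apply: to0_sum => i; apply: to0_sum => j.
    by move=> e1 e1p; have [M HM] := hA i j e1 e1p; exists M => m hm; rewrite normr_id HM.
  have hb := to0Z (mnorm x^T * mnorm S0 * mnorm x) (to0M hmn hmn).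
  apply: (to0_le hb) => m.
  rewrite /qf trmx_mul trmxK !mulmxA.
  apply: (le_trans (entry_le_mnorm _)).
  set B := A ^+ m.
  apply: (le_trans (mnorm_mul _ _)).
  apply: (@le_trans _ _ (mnorm x^T * mnorm B * mnorm S0 * mnorm B^T * mnorm x)).
    apply: ler_wpM2r; first exact: mnorm_ge0.
    apply: (le_trans (mnorm_mul _ _)); apply: ler_wpM2r; first exact: mnorm_ge0.
    apply: (le_trans (mnorm_mul _ _)); apply: ler_wpM2r; first exact: mnorm_ge0.
    exact: mnorm_mul.
  by rewrite !mnorm_tr [X in X <= _](_ : _ = mnorm x * mnorm S0 * mnorm x * (mnorm B * mnorm B)) //; ring.
apply: (@lt_le_trans _ _ (eps * qf U ((A ^+ k)^T *m x))); first by rewrite mulr_gt0.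
apply: ge_of_eps => e ep.
have [M HM] := hrest e ep.
set m := maxn M k.+1.
have := lyap_expand hL m => hS.
rewrite hS qf_add qf_sum.
have h1 := HM m (leq_maxl _ _).
have h2 : eps * qf U ((A ^+ k)^T *m x) <= \sum_(j < m) qf (A ^+ j *m (eps *: U) *m (A ^+ j)^T) x.
  under eq_bigr do rewrite qf_conj qfZ.
  apply: (@sum_ge_term (fun j => eps * qf U ((A ^+ j)^T *m x))).
    by move=> j; rewrite mulr_ge0 // ltW.
  exact: leq_maxr.
rewrite qf_conj.
have := ler_norm (- qf S0 ((A ^+ m)^T *m x)); rewrite normrN => h3.
lra.
Qed.

End P4.
Section P5.
Variable R : realType.

Lemma sym_bil n (U : 'M[R]_n) (x y : 'cV[R]_n) : U^T = U ->
  (x^T *m U *m y) 0 0 = (y^T *m U *m x) 0 0.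
Proof.
move=> hU; transitivity ((x^T *m U *m y)^T 0 0); first by rewrite [RHS]mxE.
by rewrite !trmx_mul trmxK hU mulmxA.
Qed.

Lemma eD p q (A B : 'M[R]_(p, q)) i j : (A + B) i j = A i j + B i j.
Proof. by rewrite mxE. Qed.
Lemma eZ p q c (A : 'M[R]_(p, q)) i j : (c *: A) i j = c * A i j.
Proof. by rewrite mxE. Qed.

Lemma qf_lin n (U : 'M[R]_n) (x y : 'cV[R]_n) (t : R) : U^T = U ->
  qf U (x + t *: y) = qf U x + 2 * t * (y^T *m U *m x) 0 0 + t ^+ 2 * qf U y.
Proof.
move=> hU; rewrite /qf; have -> : (x + t *: y)^T = x^T + t *: y^T by rewrite linearD linearZ.
rewrite !mulmxDl !mulmxDr.
rewrite -!scalemxAl -!scalemxAr.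
rewrite !eD !eZ (sym_bil x y hU); ring.
Qed.

Lemma psd_null n (U : 'M[R]_n) (x : 'cV[R]_n) : U^T = U -> (forall y, 0 <= qf U y) ->
  qf U x = 0 -> U *m x = 0.
Proof.
move=> hU hpsd hx; apply/matrixP => i j; rewrite (ord1 j) [RHS]mxE.
set y : 'cV[R]_n := delta_mx i 0.
have hy : (y^T *m U *m x) 0 0 = (U *m x) i 0.
  rewrite -mulmxA mxE (bigD1 i) //= big1 ?addr0 => [|c ci].
    by rewrite !mxE !eqxx mul1r.
  by rewrite !mxE (negbTE ci) mul0r.
rewrite -hy; set b := (y^T *m U *m x) 0 0; set c := qf U y.
have c0 : 0 <= c by apply: hpsd.
set t := - b / (c + 1).
have ht : b = - t * (c + 1).
  have c1 : c + 1 != 0 by rewrite gt_eqF //; lra.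
  by rewrite /t mulNr divfK // opprK.
have := hpsd (x + t *: y); rewrite qf_lin // hx -/b -/c add0r => h.
have h2 : t ^+ 2 * (c + 2) <= 0 by rewrite ht in h; nra.
have : t = 0 by nra.
by rewrite ht => ->; rewrite oppr0 mul0r.
Qed.

Lemma cv_ne0 n (x : 'cV[R]_n) : x != 0 -> exists k, x k 0 != 0.
Proof.
move=> x0; apply/not_existsP => h; move/eqP: x0; apply; apply/matrixP => i j.
by rewrite (ord1 j) mxE; have := h i; move/negP; rewrite negbK => /eqP.
Qed.

Lemma qf_delta n (v : 'cV[R]_n) k : qf (delta_mx k k) v = v k 0 ^+ 2.
Proof.
rewrite /qf qf_expand (bigD1 k) //= [X in _ + X]big1 ?addr0 => [|i ik]; last first.
  by rewrite big1 // => j _; rewrite mxE (negbTE ik) /= mulr0 mul0r.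
rewrite (bigD1 k) //= [X in _ + X]big1 ?addr0 => [|j jk]; last by rewrite mxE (negbTE jk) andbF mulr0 mul0r.
by rewrite mxE !eqxx mulr1 expr2.
Qed.

Lemma qf_sumE n (P : {set 'I_n}) (c : 'I_n -> R) v :
  qf (\sum_(k in P) c k *: delta_mx k k) v = \sum_(k in P) c k * v k 0 ^+ 2.
Proof.
apply: (big_rec2 (fun M a => qf M v = a)); first by rewrite /qf mulmx0 mul0mx mxE.
by move=> k M a _ <-; rewrite qf_add qfZ qf_delta.
Qed.

Lemma sum_ge_termP n (P : {set 'I_n}) (f : 'I_n -> R) k : k \in P ->
  (forall j, j \in P -> 0 <= f j) -> f k <= \sum_(j in P) f j.
Proof.
move=> kP f0; rewrite (bigD1 k) //= lerDl; apply: sumr_ge0 => j /andP[jP _]; exact: f0.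
Qed.

Lemma mul_delta_col n m (M : 'M[R]_(m, n)) c k : (M *m (delta_mx k 0 : 'cV[R]_n)) c 0 = M c k.
Proof.
rewrite mxE (bigD1 k) //= big1 ?addr0 => [|i ik]; first by rewrite mxE !eqxx mulr1.
by rewrite mxE (negbTE ik) mulr0.
Qed.

Lemma krylov_entry n N (A : 'M[R]_n) k (x : 'cV[R]_n) (j : 'I_N) :
  (krylov N A (ubasis k) *m x) j 0 = ((A ^+ j)^T *m x) k 0.
Proof.
rewrite !mxE; apply: eq_bigr => c _; rewrite !mxE.
by rewrite /ubasis; congr (_ * _); rewrite -(mul_delta_col (A ^+ j) c k) [RHS]mxE.
Qed.

Lemma krylov_inj n N (C : 'M[R]_n) (u y : 'cV[R]_n) :
  \rank (krylov N C u) = n -> (forall j : 'I_N, (krylov N C u *m y) j 0 = 0) -> y = 0.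
Proof.
move=> hr hj; have : row_full (krylov N C u) by rewrite /row_full hr.
move/row_fullP => [B hB].
have Ky : krylov N C u *m y = 0.
  by apply/matrixP => j c; rewrite (ord1 c) hj mxE.
by rewrite -[y]mul1mx -hB -mulmxA Ky mulmx0.
Qed.

End P5.
Section P6.
Variable R : realType.

Lemma qf_sumE1 n (P : {set 'I_n}) (v : 'cV[R]_n) :
  qf (\sum_(k in P) Emat k) v = \sum_(k in P) v k 0 ^+ 2.
Proof.
rewrite (eq_bigr (fun k => (1 : R) *: (delta_mx k k : 'M[R]_n))); last by move=> k _; rewrite scale1r.
by rewrite qf_sumE; apply: eq_bigr => k _; rewrite mul1r.
Qed.

Lemma psd_lb n (U : 'M[R]_n) (lamT : R) (Mubar : {set 'I_n}) (y : 'cV[R]_n) :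
  psd (U - lamT *: \sum_(k in Mubar) Emat k) ->
  lamT * \sum_(k in Mubar) y k 0 ^+ 2 <= qf U y.
Proof.
move=> [_ h]; have := h y; rewrite -/(qf _ y) -scaleNr qf_add qfZ qf_sumE1.
by rewrite mulNr subr_ge0.
Qed.

Lemma exists_nz_entry n N (C : 'M[R]_n) (u y : 'cV[R]_n) :
  \rank (krylov N C u) = n -> y != 0 -> exists j : 'I_N, (krylov N C u *m y) j 0 != 0.
Proof.
move=> hr y0; apply/not_existsP => h; move/eqP: y0; apply.
apply: (krylov_inj hr) => j; have := h j; by move/negP; rewrite negbK => /eqP.
Qed.

Lemma ctrl n (A U H : 'M[R]_n) (Mu : {set 'I_n}) (lamp : 'I_n -> R)
  (lamT : R) (Mubar : {set 'I_n}) :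
  U^T = U -> (forall y, 0 <= qf U y) ->
  H *m H^T = 1%:M -> (forall k, k \in Mu -> 0 < lamp k) ->
  H *m U *m H^T = \sum_(k in Mu) lamp k *: Emat k ->
  0 < lamT -> psd (U - lamT *: \sum_(k in Mubar) Emat k) ->
  (   \rank U = n
   \/ (exists k, k \in Mu /\
         krylov_dim_eq (H *m A *m invmx H) (ubasis k) n)
   \/ #|Mubar| = n
   \/ (exists k, k \in Mubar /\ krylov_dim_eq A (ubasis k) n)) ->
  forall x, x != 0 -> exists j, 0 < qf U ((A ^+ j)^T *m x).
Proof.
move=> hU hpsd hH hlam hD hT hpsdT hcase x x0.
have sq0 : forall (a : R), a != 0 -> 0 < a ^+ 2.
  by move=> a a0; rewrite exprn_even_gt0.
case: hcase => [hr|[[k [kMu [[N hN] _]]]|[hc|[k [kM [[N hN] _]]]]]].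
- exists 0%N; rewrite expr0 trmx1 mul1mx lt_def hpsd andbT.
  apply/negP => /eqP q0; move/eqP: x0; apply.
  have Ux := psd_null hU hpsd q0.
  have uU : U \in unitmx by rewrite -row_free_unit /row_free hr.
  by rewrite -[x]mul1mx -(mulVmx uU) -mulmxA Ux mulmx0.
- have hH' : H^T *m H = 1%:M by apply: mulmx1C.
  have uH : H \in unitmx by case: (mulmx1_unit hH).
  have iH : invmx H = H^T.
    by rewrite -[invmx H]mulmx1 -hH mulmxA (mulVmx uH) mul1mx.
  have hC : forall j, (H *m A *m invmx H) ^+ j = H *m A ^+ j *m H^T.
    elim=> [|j IH]; first by rewrite !expr0 mulmx1 hH.
    rewrite exprSr IH exprSr iH -!mulmxE !mulmxA -[H *m A ^+ j *m H^T *m H]mulmxA hH' mulmx1.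
    done.
  have hxH : H *m x != 0.
    apply: contra x0 => /eqP hx; apply/eqP.
    by rewrite -[x]mul1mx -hH' -mulmxA hx mulmx0.
  have [j hj] := exists_nz_entry hN hxH.
  rewrite krylov_entry hC !trmx_mul trmxK -!mulmxA (mulmxA H^T) hH' mul1mx in hj.
  exists j.
  have hUe : U = H^T *m (\sum_(k in Mu) lamp k *: Emat k) *m H.
    by rewrite -hD !mulmxA hH' mul1mx -mulmxA hH' mulmx1.
  rewrite hUe -[H in _ *m H](trmxK H) qf_conj trmxK.
  apply: (@lt_le_trans _ _ (lamp k * (H *m ((A ^+ j)^T *m x)) k 0 ^+ 2)).
    by rewrite mulr_gt0 ?hlam // sq0.
  rewrite /Emat qf_sumE.
  apply: (sum_ge_termP (f := fun k0 => lamp k0 * (H *m ((A ^+ j)^T *m x)) k0 0 ^+ 2)) => //.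
  by move=> i iM; rewrite mulr_ge0 ?sqr_ge0 // ltW // hlam.
- have hM : Mubar = (finset.setT : {set 'I_n}).
    by apply/eqP; rewrite eqEcard finset.subsetT /= finset.cardsT card_ord hc.
  have [i xi] := cv_ne0 x0.
  exists 0%N; rewrite expr0 trmx1 mul1mx.
  apply: (lt_le_trans _ (psd_lb x hpsdT)).
  rewrite mulr_gt0 // (lt_le_trans (sq0 _ xi)) //.
  apply: (sum_ge_termP (f := fun k0 => x k0 0 ^+ 2)); first by rewrite hM inE.
  by move=> j _; exact: sqr_ge0.
- have [j hj] := exists_nz_entry hN x0.
  rewrite krylov_entry in hj.
  exists j; apply: (lt_le_trans _ (psd_lb _ hpsdT)).
  rewrite mulr_gt0 // (lt_le_trans (sq0 _ hj)) //.
  apply: (sum_ge_termP (f := fun k0 => ((A ^+ j)^T *m x) k0 0 ^+ 2)) => //.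
  by move=> i _; exact: sqr_ge0.
Qed.

End P6.
Section P7.
Variable R : realType.

Lemma le_of_eq (a b : R) : a = b -> a <= b. Proof. by move=> ->. Qed.

Lemma no_vanish (g gd : R -> R) (t1 Kb : R) : 0 <= t1 ->
  (forall s : R, is_derive s (1 : R) g (gd s)) ->
  (forall s, 0 <= s <= t1 -> - (Kb * g s) <= gd s) -> 0 < g 0 -> 0 < g t1.
Proof.
move=> t10 hg hb g0.
pose e := fun s : R => expR (Kb * s).
have he : forall s : R, is_derive s (1 : R) e (Kb * e s).
  move=> s; rewrite [Kb * _]mulrC.
  have hl : is_derive s (1 : R) (fun s : R => Kb * s) Kb.
    have := is_deriveZ Kb (is_derive_id s (1 : R)); rewrite [Kb%:A]mulr1; exact.
  exact: (is_derive1_comp (f := expR) (g := fun s : R => Kb * s)).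
pose h := fun s => g s * e s.
have hh : forall s : R, is_derive s (1:R) h (g s * (Kb * e s) + e s * gd s).
  move=> s; have := is_deriveM (hg s) (he s); by [].
have mono : h 0 <= h t1.
  apply: (@ger0_derive1_ndecr _ h 0 t1) => //.
  - move=> x; rewrite in_itv /= => /andP[x0 x1].
    rewrite derive1E (@derive_val _ _ _ _ _ _ _ (hh x)).
    have := hb x; rewrite (ltW x0) (ltW x1) => /(_ isT) hx.
    have ex0 : 0 < e x by exact: expR_gt0.
    have : 0 <= e x * (gd x + Kb * g x) by rewrite mulr_ge0 // ?(ltW ex0) //; lra.
    move=> h1; apply: (le_trans h1); apply: le_of_eq; ring.
  - apply: derivable_within_continuous => x _; by case: (hh x).
have : 0 < h 0 by rewrite /h /e mulr0 expR0 mulr1.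
move/lt_le_trans => /(_ _ mono); rewrite /h pmulr_lgt0 //; exact: expR_gt0.
Qed.

End P7.
Section P8.
Variable R : realType.

Definition pc (f : R -> R) (x : R) := {for x, continuous f}.

Lemma pc_cst (c : R) x : pc (fun _ => c) x.
Proof. exact: cvg_cst. Qed.

Lemma pc_add f g x : pc f x -> pc g x -> pc (fun s => f s + g s) x.
Proof. by move=> hf hg; exact: (continuousD hf hg). Qed.

Lemma pc_mul f g x : pc f x -> pc g x -> pc (fun s => f s * g s) x.
Proof. by move=> hf hg; exact: (continuousM hf hg). Qed.

Lemma pc_ext (f g : R -> R) x : (forall s, f s = g s) -> pc g x -> pc f x.
Proof. by move=> h; have -> : f = g by apply: funext. Qed.

Lemma pc_inv f x : f x != 0 -> pc f x -> pc (fun s => (f s)^-1) x.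
Proof. by move=> h hf; exact: continuousV. Qed.

Lemma pc_norm f x : pc f x -> pc (fun s => `|f s|) x.
Proof.
move=> hf; apply: continuous_comp hf _; exact: norm_continuous.
Qed.

Lemma pc_sum (I : Type) (r : seq I) (P : pred I) (F : I -> R -> R) x :
  (forall i, pc (F i) x) -> pc (fun s => \sum_(i <- r | P i) F i s) x.
Proof.
move=> hF; elim: r => [|i r IH].
  by under [fun s => _]funext do rewrite big_nil; exact: pc_cst.
under [fun s => _]funext do rewrite big_cons.
case: (P i); last exact: IH.
exact: pc_add.
Qed.

Lemma pc_prod (I : Type) (r : seq I) (P : pred I) (F : I -> R -> R) x :
  (forall i, pc (F i) x) -> pc (fun s => \prod_(i <- r | P i) F i s) x.
Proof.
move=> hF; elim: r => [|i r IH].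
  by under [fun s => _]funext do rewrite big_nil; exact: pc_cst.
under [fun s => _]funext do rewrite big_cons.
case: (P i); last exact: IH.
exact: pc_mul.
Qed.

Definition mpc p q (M : R -> 'M[R]_(p, q)) x := forall i j, pc (fun s => M s i j) x.

Lemma mpc_mul p q r (M : R -> 'M[R]_(p, q)) (N : R -> 'M[R]_(q, r)) x :
  mpc M x -> mpc N x -> mpc (fun s => M s *m N s) x.
Proof.
move=> hM hN i j.
apply: (pc_ext (g := fun s => \sum_k M s i k * N s k j)); first by move=> s; rewrite mxE.
by apply: pc_sum => k; apply: pc_mul.
Qed.

Lemma mpc_tr p q (M : R -> 'M[R]_(p, q)) x : mpc M x -> mpc (fun s => (M s)^T) x.
Proof. by move=> hM i j; apply: (pc_ext (g := fun s => M s j i)); [move=> s; rewrite mxE | exact: hM]. Qed.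

Lemma mpc_cst p q (M : 'M[R]_(p, q)) x : mpc (fun _ => M) x.
Proof. by move=> i j; exact: pc_cst. Qed.

Lemma pc_det n (M : R -> 'M[R]_n) x : mpc M x -> pc (fun s => \det (M s)) x.
Proof.
move=> hM.
change (pc (fun s => \sum_(sg : {perm 'I_n}) (-1) ^+ sg * \prod_i M s i (sg i)) x).
apply: pc_sum => sg; apply: pc_mul; first exact: pc_cst.
by apply: pc_prod => i; exact: hM.
Qed.

Lemma mpc_adj n (M : R -> 'M[R]_n) x : mpc M x -> mpc (fun s => \adj (M s)) x.
Proof.
move=> hM i j.
apply: (pc_ext (g := fun s => (-1) ^+ (j + i) * \det (row' j (col' i (M s))))).
  by move=> s; rewrite mxE.
apply: pc_mul; first exact: pc_cst.
apply: pc_det => a b.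
apply: (pc_ext (g := fun s => M s (lift j a) (lift i b))); first by move=> s; rewrite !mxE.
exact: hM.
Qed.

Lemma mpc_inv n (M : R -> 'M[R]_n) x : mpc M x -> \det (M x) != 0 ->
  mpc (fun s => (\det (M s))^-1 *: \adj (M s)) x.
Proof.
move=> hM hd i j.
apply: (pc_ext (g := fun s => (\det (M s))^-1 * \adj (M s) i j)); first by move=> s; rewrite mxE.
apply: pc_mul; first exact: pc_inv hd (pc_det hM).
exact: mpc_adj.
Qed.

End P8.
Section P9.
Variable R : realType.

Lemma le_sum_ord n (f : 'I_n -> R) k : (forall j, 0 <= f j) -> f k <= \sum_j f j.
Proof. by move=> f0; rewrite (bigD1 k) //= lerDl sumr_ge0. Qed.

Lemma is_derive_sumf n (F : 'I_n -> R -> R) (dF : 'I_n -> R) (t : R) :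
  (forall i, is_derive t (1 : R) (F i) (dF i)) ->
  is_derive t (1 : R) (fun s => \sum_i F i s) (\sum_i dF i).
Proof. by move=> h; have := is_derive_sum h; rewrite fct_sumE. Qed.

Lemma cross_bound (a b d G : R) : a * a <= G -> b * b <= G -> - (`|d| * G) <= a * d * b.
Proof.
move=> ha hb; have h1 := sqr_ge0 (a + b); have h2 := sqr_ge0 (a - b).
rewrite !expr2 in h1 h2.
case: (lerP 0 d) => d0.
  rewrite ger0_norm //; nra.
rewrite ltr0_norm //; nra.
Qed.

Lemma Phi_unit n (D Phi : R -> 'M[R]_n) : fundamental D Phi ->
  (forall i j, continuous (fun t : R => D t i j)) ->
  forall t1, 0 <= t1 -> Phi t1 \in unitmx.
Proof.
move=> [hP0 hPd] hD t1 t10.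
case: (boolP (Phi t1 \in unitmx)) => // nu; exfalso.
have : \det (Phi t1)^T == 0 by rewrite det_tr; move: nu; rewrite unitmxE unitfE negbK.
move/det0P => [v v0 hv].
set w := v^T.
have w0 : w != 0 by rewrite trmx_eq0.
have hw : Phi t1 *m w = 0.
  have : (v *m (Phi t1)^T)^T = 0 by rewrite hv trmx0.
  by rewrite trmx_mul trmxK.
pose x := fun s => Phi s *m w.
pose g := fun s => \sum_i x s i 0 * x s i 0.
pose gd := fun s => \sum_i (x s i 0 * (D s *m x s) i 0 + x s i 0 * (D s *m x s) i 0).
have hx : forall s i, is_derive s (1:R) (fun s0 => x s0 i 0) ((D s *m x s) i 0).
  move=> s i.
  have -> : (fun s0 => x s0 i 0) = (fun s0 => \sum_j w j 0 * Phi s0 i j).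
    by apply: funext => s0; rewrite /x mxE; apply: eq_bigr => j _; rewrite mulrC.
  have -> : (D s *m x s) i 0 = \sum_j w j 0 * (D s *m Phi s) i j.
    by rewrite /x mulmxA mxE; apply: eq_bigr => j _; rewrite mulrC.
  by apply: is_derive_sumf.
have hg : forall s, is_derive s (1:R) g (gd s).
  move=> s; apply: is_derive_sumf => i.
  have := is_deriveM (hx s i) (hx s i); by [].
pose K := fun s => \sum_i \sum_j `|D s i j|.
have Kc : continuous K.
  move=> s; apply: pc_sum => i; apply: pc_sum => j; apply: pc_norm; exact: hD.
have [c c01 Kmax] := EVT_max t10 (continuous_subspaceT Kc).
set Kb := K c.
have gpos : forall s, 0 <= g s.
  by move=> s; apply: sumr_ge0 => i _; rewrite -expr2 sqr_ge0.
have hb : forall s, 0 <= s <= t1 -> - ((2 * Kb) * g s) <= gd s.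
  move=> s /andP[s0 s1].
  have Ks : K s <= Kb by apply: Kmax; rewrite in_itv /= s0 s1.
  have e1 : gd s = 2 * \sum_i \sum_j x s i 0 * D s i j * x s j 0.
    rewrite /gd mulr_sumr; apply: eq_bigr => i _.
    rewrite [(D s *m x s) i 0]mxE.
    have -> : \sum_j x s i 0 * D s i j * x s j 0 = x s i 0 * \sum_j D s i j * x s j 0.
      by rewrite mulr_sumr; apply: eq_bigr => j _; rewrite mulrA.
    ring.
  have lb : - (K s * g s) <= \sum_i \sum_j x s i 0 * D s i j * x s j 0.
    rewrite /K mulr_suml -sumrN; apply: ler_sum => i _.
    rewrite mulr_suml -sumrN; apply: ler_sum => j _.
    apply: cross_bound.
      by apply: (le_sum_ord (f := fun i => x s i 0 * x s i 0)) => k; rewrite -expr2 sqr_ge0.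
    by apply: (le_sum_ord (f := fun i => x s i 0 * x s i 0)) => k; rewrite -expr2 sqr_ge0.
  have := ler_wpM2r (gpos s) Ks => h.
  rewrite e1; lra.
have g0 : 0 < g 0.
  have [k wk] := cv_ne0 w0.
  rewrite /g /x hP0 mul1mx.
  apply: (lt_le_trans _ (le_sum_ord (f := fun i => w i 0 * w i 0) k _)).
    by rewrite -expr2 exprn_even_gt0.
  by move=> j; rewrite -expr2 sqr_ge0.
have := no_vanish t10 hg hb g0.
by rewrite /g /x hw big1 ?ltxx // => i _; rewrite mxE mulr0.
Qed.

End P9.
Section P10.
Variable R : realType.
Variable t : R.

Lemma intg (f : R -> R) : (forall s, 0 <= s <= t -> pc f s) ->
  lebesgue_measure.-integrable `[0, t] (EFin \o f).
Proof.
move=> hf; apply: continuous_compact_integrable; first exact: segment_compact.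
apply: continuous_in_subspaceT => s; rewrite inE /= in_itv /= => hs.
exact: hf.
Qed.

Lemma Rint_sum (T : Type) (r : seq T) (F : T -> R -> R) :
  (forall i s, 0 <= s <= t -> pc (F i) s) ->
  \int[lebesgue_measure]_(s in `[0, t]) (\sum_(i <- r) F i s) =
  \sum_(i <- r) \int[lebesgue_measure]_(s in `[0, t]) F i s.
Proof.
move=> hF; have mI : measurable (`[0, t] : set R) by exact: measurable_itv.
elim: r => [|i r IH].
  rewrite big_nil; under eq_Rintegral => s _ do rewrite big_nil.
  have := @Rintegral_cst _ _ _ lebesgue_measure `[0, t] mI 0.
  by rewrite mul0r.
rewrite big_cons; under eq_Rintegral => s _ do rewrite big_cons.
rewrite RintegralD ?IH //.
  by apply: intg => s hs; exact: hF.
by apply: intg => s hs; apply: pc_sum => j; exact: hF.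
Qed.

Lemma RintZ (c : R) (f : R -> R) : (forall s, 0 <= s <= t -> pc f s) ->
  c * \int[lebesgue_measure]_(s in `[0, t]) f s =
  \int[lebesgue_measure]_(s in `[0, t]) (c * f s).
Proof.
move=> hf; have mI : measurable (`[0, t] : set R) by exact: measurable_itv.
by rewrite RintegralZl //; exact: intg.
Qed.

End P10.
Section P11.
Variable R : realType.

Lemma qf_gram p q (G : 'M[R]_(p, q)) x : 0 <= qf (G *m G^T) x.
Proof.
rewrite /qf.
have -> : x^T *m (G *m G^T) *m x = (G^T *m x)^T *m (G^T *m x).
  by rewrite trmx_mul trmxK !mulmxA.
rewrite mxE; apply: sumr_ge0 => k _; rewrite mxE -expr2; exact: sqr_ge0.
Qed.

Lemma Ups_props n N (D Phi : R -> 'M[R]_n) (Lam : R -> 'M[R]_(n, N)) (t : R) :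
  fundamental D Phi -> (forall i j, continuous (fun s : R => D s i j)) ->
  (forall i j, continuous (fun s : R => Lam s i j)) -> 0 <= t ->
  (Upsilon Phi Lam t)^T = Upsilon Phi Lam t /\ forall x, 0 <= qf (Upsilon Phi Lam t) x.
Proof.
move=> hF hD hL t0.
have hu := Phi_unit hF hD.
pose G' := fun s => Phi t *m ((\det (Phi s))^-1 *: \adj (Phi s)) *m Lam s.
pose g := fun i j s => (G' s *m (G' s)^T) i j.
have Pc : forall s, mpc Phi s.
  move=> s i j; apply: differentiable_continuous; apply/derivable1_diffP.
  by case: hF => _ h; case: (h s i j).
have G'c : forall s, 0 <= s <= t -> mpc G' s.
  move=> s /andP[s0 st].
  have dn : \det (Phi s) != 0 by rewrite -unitfE -unitmxE hu.
  apply: mpc_mul; last by move=> i j; exact: hL.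
  apply: mpc_mul; first exact: mpc_cst.
  exact: mpc_inv (Pc s) dn.
have gc : forall i j s, 0 <= s <= t -> pc (g i j) s.
  move=> i j s hs; apply: (mpc_mul (G'c s hs) (mpc_tr (G'c s hs))).
have hUe : forall i j, Upsilon Phi Lam t i j =
    \int[lebesgue_measure]_(s in `[0, t]) g i j s.
  move=> i j; rewrite /Upsilon mxE; apply: eq_Rintegral => s.
  rewrite inE /= in_itv /= => /andP[s0 st].
  by rewrite /g /G' /invmx hu.
split.
  apply/matrixP => i j; rewrite mxE !hUe; apply: eq_Rintegral => s _; rewrite /g.
  have h : (G' s *m (G' s)^T)^T = G' s *m (G' s)^T by rewrite trmx_mul trmxK.
  by rewrite -[in LHS]h mxE.
move=> x; rewrite /qf qf_expand.
have e1 : \sum_i \sum_j x i 0 * Upsilon Phi Lam t i j * x j 0 =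
    \sum_i \sum_j \int[lebesgue_measure]_(s in `[0, t]) (x i 0 * x j 0 * g i j s).
  apply: eq_bigr => i _; apply: eq_bigr => j _.
  rewrite hUe -RintZ; last by move=> s hs; exact: gc.
  by rewrite mulrAC.
rewrite e1.
have e2 : forall i, \sum_j \int[lebesgue_measure]_(s in `[0, t]) (x i 0 * x j 0 * g i j s)
    = \int[lebesgue_measure]_(s in `[0, t]) (\sum_j x i 0 * x j 0 * g i j s).
  move=> i; rewrite (@Rint_sum R t _ _ (fun j s => x i 0 * x j 0 * g i j s)) //.
  by move=> j s hs; apply: pc_mul; [exact: pc_cst | exact: gc].
rewrite (eq_bigr _ (fun i _ => e2 i)).
rewrite -(@Rint_sum R t _ _ (fun i s => \sum_j x i 0 * x j 0 * g i j s)); last first.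
  move=> i s hs; apply: pc_sum => j; apply: pc_mul; [exact: pc_cst | exact: gc].
apply: Rintegral_ge0 => s _.
have := qf_gram (G' s) x; rewrite /qf qf_expand.
move/le_trans; apply; apply: le_of_eq.
apply: eq_bigr => i _; apply: eq_bigr => j _; rewrite /g; ring.
Qed.

End P11.
Section PF.
Variable R : realType.

Lemma posdef_Sigma n N (Phi D : R -> 'M[R]_n) (Lst : R -> 'M[R]_(n, N)) (eps : R) S0 t :
  fundamental D Phi -> (forall i j, continuous (fun t : R => D t i j)) ->
  (forall i j, continuous (fun t : R => Lst t i j)) -> 0 < eps -> 0 <= t ->
  S0^T = S0 -> (forall x, x != 0 -> 0 < qf S0 x) ->
  posdef (Sigma_d Phi Lst eps S0 t).
Proof.
move=> hF hD hL e0 t0 hS hSp.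
have [Us Up] := Ups_props hF hD hL t0.
have hu := Phi_unit hF hD t0.
split.
  by rewrite /Sigma_d linearD linearZ /= Us !trmx_mul trmxK hS mulmxA.
move=> x x0; rewrite -/(qf _ x) /Sigma_d qf_add qf_conj qfZ.
have y0 : (Phi t)^T *m x != 0.
  apply: contra x0 => /eqP h; apply/eqP.
  have ut : (Phi t)^T \in unitmx by rewrite unitmx_tr.
  by rewrite -[x]mul1mx -(mulVmx ut) -mulmxA h mulmx0.
have := hSp _ y0; have := Up x; move=> h1 h2.
have h3 : 0 <= eps * qf (Upsilon Phi Lst t) x by rewrite mulr_ge0 // ltW.
lra.
Qed.

End PF.

Unset Implicit Arguments.

Theorem corollary4p1 (R : realType) (n N : nat) (theta eps : R)
  (Dst : R -> 'M[R]_n) (Lst : R -> 'M[R]_(n, N)) (Phi : R -> 'M[R]_n)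
  (S0 : 'M[R]_n) (H : 'M[R]_n) (Mu : {set 'I_n}) (lamp : 'I_n -> R)
  (lamT : R) (Mubar : {set 'I_n}) :
  0 < theta -> 0 < eps ->
  (forall i j, continuous (fun t : R => Dst t i j)) ->
  (forall i j, continuous (fun t : R => Lst t i j)) ->
  (forall t : R, Dst (t + theta) = Dst t) ->
  (forall t : R, Lst (t + theta) = Lst t) ->
  fundamental Dst Phi ->
  CMbar (Phi theta) ->
  (* Sigma^d_eps(0): symmetric solution of the discrete Lyapunov equation *)
  S0^T = S0 ->
  Phi theta *m S0 *m (Phi theta)^T - S0 + eps *: Upsilon Phi Lst theta = 0 ->
  (* H_eps orthogonal diagonalising Upsilon(theta) *)
  H *m H^T = 1%:M ->
  (forall k, k \in Mu -> 0 < lamp k) ->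
  H *m Upsilon Phi Lst theta *m H^T = \sum_(k in Mu) lamp k *: Emat k ->
  (* Upsilon(theta) >= lamT * sum_{k in Mubar} E_{n,k} *)
  0 < lamT ->
  psd (Upsilon Phi Lst theta - lamT *: \sum_(k in Mubar) Emat k) ->
  (   \rank (Upsilon Phi Lst theta) = n
   \/ (exists k, k \in Mu /\
         krylov_dim_eq (H *m Phi theta *m invmx H) (ubasis k) n)
   \/ #|Mubar| = n
   \/ (exists k, k \in Mubar /\ krylov_dim_eq (Phi theta) (ubasis k) n)) ->
  forall t : R, 0 <= t -> posdef (Sigma_d Phi Lst eps S0 t).
Proof.
move=> th0 e0 hD hL _ _ hF hCM hS hLy hH hlam hHD hT hpsdT hcase t t0.
apply: (posdef_Sigma hF hD hL e0 t0 hS).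
have [Us Up] := Ups_props hF hD hL (ltW th0).
have hctrl := @ctrl R n (Phi theta) _ H Mu lamp lamT Mubar Us Up hH hlam hHD hT hpsdT hcase.
case: n Dst Lst Phi S0 H Mu lamp Mubar hD hL hF hCM hS hLy hH hlam hHD hpsdT hcase Us Up hctrl =>
  [|n'] Dst Lst Phi S0 H Mu lamp Mubar hD hL hF hCM hS hLy hH hlam hHD hpsdT hcase Us Up hctrl.
  by move=> x x0; exfalso; move/eqP: x0; apply; apply: flatmx0.
apply: (S0_posdef e0 _ hLy Up hctrl).
exact: pow_to0.
Qed.
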